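(* Let $G,H$ be locally compact second countable compactly generated groups, $\varphi\colon\mathbb{R}_+\to\mathbb{R}_+$ a map, $G\curvearrowright(X,\nu)$ a free probability measure-preserving action on a standard probability space, and $c\colon G\times X\to H$ a $\varphi$-integrable $H$-valued cocycle. Then there exist a measurable subset $A\subset G$ and a sequence $(K_n)_{n\ge1}$ of positive integers such that: $\lambda_G(A)>0$ and $A$ contains a countable dense subset of $G$; $K_n\to+\infty$; and for every $g\in A$ the series $\sum_{n\ge1}K_n\,\varphi(n)\,\nu(\{x: |c(g,x)|_H=n\})$ converges.
   Context: An $H$-valued cocycle is a measurable $c\colon G\times X\to H$ with $c(g_1g_2,x)=c(g_1,g_2\cdot x)c(g_2,x)$. $|\cdot|_H$ is the (integer-valued) word length on $H$ for a compact generating set; $\lambda_G$ is a Haar measure; $c$ is $\varphi$-integrable if $\sup_{g\in S_G}\int_X\varphi(|c(g,x)|_H)\,d\nu(x)<\infty$ for a compact generating set $S_G$ of $G$ (and in particular $\int_X\varphi(|c(g,x)|_H)d\nu(x)<\infty$ for every $g\in G$). *)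

(* Defs.v *)
From HB Require Import structures.
From mathcomp Require Import all_boot all_order all_algebra.
From mathcomp Require Import all_classical all_reals all_analysis.
Set Implicit Arguments. Unset Strict Implicit. Unset Printing Implicit Defensive.
Import Order.TTheory GRing.Theory Num.Theory.
Local Open Scope classical_set_scope.
Local Open Scope ring_scope.

Notation borelT T := (g_sigma_algebraType (@open T)).

Definition is_group (G : Type) (mul : G -> G -> G) (inv : G -> G) (e : G) :=
  [/\ forall x y z, mul x (mul y z) = mul (mul x y) z,
      forall x, mul e x = x, forall x, mul x e = x,
      forall x, mul (inv x) x = e & forall x, mul x (inv x) = e].

Inductive in_word (G : Type) (mul : G -> G -> G) (inv : G -> G) (e : G)
    (S : set G) : nat -> G -> Prop :=
  | in_word0 : in_word mul inv e S 0 e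
  | in_wordS n s g : (S s \/ S (inv s)) -> in_word mul inv e S n g ->
      in_word mul inv e S n.+1 (mul s g).

Definition generates (G : Type) (mul : G -> G -> G) (inv : G -> G) (e : G)
    (S : set G) := forall g, exists n, in_word mul inv e S n g.

(** Word length |g|_S := min { n | g ∈ (S ∪ S^{-1})^n } (0 if no such n,
    which never happens when S generates G). *)
Definition word_length (G : Type) (mul : G -> G -> G) (inv : G -> G) (e : G)
    (S : set G) (g : G) : nat :=
  match pselect (exists n, in_word mul inv e S n g) with
  | left P => ex_minn (P := fun n => `[< in_word mul inv e S n g >])
      (let: ex_intro n Hn := P in ex_intro _ n (asboolT Hn))
  | right _ => 0%N
  end.

Definition lcsc_cg_group (G : ptopologicalType) (mul : G -> G -> G)
    (inv : G -> G) (e : G) :=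
  is_group mul inv e /\
  continuous (fun p : G * G => mul p.1 p.2) /\
  continuous inv /\
  hausdorff_space G /\
  locally_compact [set: G] /\
  @second_countable G /\
  exists S : set G, compact S /\ generates mul inv e S.

Definition left_Haar (R : realType) (G : ptopologicalType) (mul : G -> G -> G)
    (lam : set (borelT G) -> \bar R) :=
  [/\ forall (g : G) (A : set (borelT G)), measurable A ->
        lam [set mul g a | a in A] = lam A,
      forall K : set G, compact K -> (lam K < +oo)%E &
      forall U : set G, open U -> U !=set0 -> (0 < lam U)%E].

(** Standard probability space: the Borel sigma-algebra of a Polish space
    (here given by a complete separable metric). *)
Definition polish_space (R : realType) (X : completePseudoMetricType R) :=
  hausdorff_space X /\ @second_countable X.

Definition free_pmp_action (R : realType) (G : ptopologicalType)
    (mul : G -> G -> G) (e : G) (X : ptopologicalType)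
    (nu : probability (borelT X) R) (act : G -> X -> X) :=
  [/\ forall x, act e x = x,
      forall g h x, act (mul g h) x = act g (act h x),
      measurable_fun [set: borelT G * borelT X] (fun p => (act p.1 p.2 : borelT X)),
      forall (g : G) (B : set (borelT X)), measurable B ->
        nu (act g @^-1` B) = nu B &
      forall g x, act g x = x -> g = e].

Definition cocycle (G : ptopologicalType) (mulG : G -> G -> G)
    (X : ptopologicalType) (act : G -> X -> X)
    (H : ptopologicalType) (mulH : H -> H -> H) (c : G -> X -> H) :=
  measurable_fun [set: borelT G * borelT X] (fun p => (c p.1 p.2 : borelT H)) /\
  forall g1 g2 x, c (mulG g1 g2) x = mulH (c g1 (act g2 x)) (c g2 x).

Definition phi_integrable (R : realType) (G : ptopologicalType)
    (mulG : G -> G -> G) (invG : G -> G) (eG : G) (X : ptopologicalType)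
    (nu : probability (borelT X) R) (H : ptopologicalType)
    (mulH : H -> H -> H) (invH : H -> H) (eH : H) (SH : set H)
    (phi : R -> R) (c : G -> X -> H) :=
  (exists SG : set G, compact SG /\ generates mulG invG eG SG /\
     (ereal_sup [set (\int[nu]_x
        (phi (word_length mulH invH eH SH (c g x))%:R)%:E)%E | g in SG]
        < +oo)%E) /\
  forall g : G,
    (\int[nu]_x (phi (word_length mulH invH eH SH (c g x))%:R)%:E < +oo)%E.

(* Main.v *)
Require Import Defs.
From HB Require Import structures.
From mathcomp Require Import all_boot all_order all_algebra.
From mathcomp Require Import all_classical all_reals all_analysis measurable_realfun.
From mathcomp Require Import ring lra.
Import Order.TTheory GRing.Theory Num.Theory.
Local Open Scope classical_set_scope.
Local Open Scope ring_scope.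
Set Implicit Arguments. Unset Strict Implicit. Unset Printing Implicit Defensive.
Lemma open_borel (T : ptopologicalType) (A : set T) : open A -> measurable (A : set (borelT T)).
Proof. move=> oA; exact: sub_sigma_algebra. Qed.
Lemma closed_borel (T : ptopologicalType) (A : set T) : closed A -> measurable (A : set (borelT T)).
Proof. move=> cA. rewrite -[A]setCK. apply: measurableC. apply: open_borel. exact: closed_openC. Qed.

Lemma inv_inv (H : Type) (mul : H -> H -> H) (inv : H -> H) (e : H) : is_group mul inv e ->
  forall x, inv (inv x) = x.
Proof.
case=> mA m1 m2 mV1 mV2 x.
by rewrite -[inv (inv x)]m2 -(mV1 x) mA mV1 m1.
Qed.

Lemma in_word_compact (H : ptopologicalType) (mul : H -> H -> H) inv e S :
  is_group mul inv e -> continuous (fun p : H * H => mul p.1 p.2) -> continuous inv ->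
  compact S -> forall n, compact [set g | in_word mul inv e S n g].
Proof.
move=> hg cm ci cS.
have cS' : compact [set s | S s \/ S (inv s)].
  have -> : [set s | S s \/ S (inv s)] = S `|` inv @` S.
    apply/seteqP; split=> s /=.
      case=> [Ss|Sis]; [by left|right; exists (inv s) => //; exact: (inv_inv hg)].
    case=> [Ss|[t St <-]]; [by left|right; by rewrite (inv_inv hg)].
  apply: compactU => //; apply: continuous_compact => //.
  by apply: continuous_subspaceT.
elim=> [|n IH].
  have -> : [set g | in_word mul inv e S 0 g] = [set e].
    apply/seteqP; split=> g /=; first by move=> h; inversion h.
    by move=> ->; constructor.
  exact: compact_set1.
have -> : [set g | in_word mul inv e S n.+1 g] =
  (fun p : H * H => mul p.1 p.2) @` ([set s | S s \/ S (inv s)] `*` [set g | in_word mul inv e S n g]).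
  apply/seteqP; split=> g /=.
    by move=> h; inversion h; subst; exists (s, g0).
  by case=> -[s h] [/= Ss Wh] <-; constructor.
apply: continuous_compact; last exact: compact_setX.
exact: continuous_subspaceT.
Qed.

Lemma wl_level_measurable (H : ptopologicalType) (mul : H -> H -> H) inv e S :
  lcsc_cg_group mul inv e -> compact S -> generates mul inv e S ->
  forall n, measurable ([set h | word_length mul inv e S h = n] : set (borelT H)).
Proof.
move=> [hg [cm [ci [hH _]]]] cS gS n.
have W m : measurable ([set g | in_word mul inv e S m g] : set (borelT H)).
  apply: closed_borel; apply: compact_closed => //; exact: in_word_compact.
have -> : [set h | word_length mul inv e S h = n] =
  [set g | in_word mul inv e S n g] `&` \bigcap_(m in `I_n) ~` [set g | in_word mul inv e S m g].
  apply/seteqP; split=> h /=.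
    rewrite /word_length; case: pselect => [P|nP]; last by exfalso; apply: nP; exact: gS.
    case: ex_minnP => m /asboolP Wm minm <-; split => // k /= km Wk.
    by have := minm k (asboolT Wk); rewrite leqNgt km.
  move=> [Wn Wlt]; rewrite /word_length; case: pselect => [P|nP]; last by exfalso; apply: nP; exists n.
  case: ex_minnP => m /asboolP Wm minm.
  apply/eqP; rewrite eqn_leq minm ?andbT; last exact: asboolT.
  by rewrite leqNgt; apply/negP => mn; exact: (Wlt m mn).
apply: measurableI => //; apply: bigcap_measurableType => m _; exact: measurableC.
Qed.
Lemma partial_le_integral d (T : measurableType d) (R : realType)
  (mu : {measure set T -> \bar R}) (w : T -> nat) (phi : R -> R) :
  (forall t, 0 <= t -> 0 <= phi t) ->
  (forall n, measurable [set x | w x = n]) ->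
  forall m M, (\sum_(m <= n < M) ((phi n%:R)%:E * mu [set x | w x = n])
     <= \int[mu]_x (phi (w x)%:R)%:E)%E.
Proof.
move=> phi0 mE m M.
have mf2 : measurable_fun setT (fun x => (phi (w x)%:R)%:E).
  move=> _ Y mY; rewrite setTI.
  have -> : (fun x => (phi (w x)%:R)%:E) @^-1` Y =
     \bigcup_(n in [set n | Y (phi n%:R)%:E]) [set x | w x = n].
    by apply/seteqP; split=> x /=; [move=> Yx; exists (w x) | move=> [n Yn /= ->]].
  by apply: bigcup_measurable => n _; exact: mE.
have mind n : measurable_fun setT (fun x => ((phi n%:R)%:E * (\1_[set x | w x = n] x)%:E)%E).
  apply: measurable_funeM; apply/measurable_EFinP.
  exact: measurable_indic.
have ind0 n x : (0 <= (phi n%:R)%:E * (\1_[set x | w x = n] x)%:E)%E.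
  by apply: mule_ge0; rewrite lee_fin ?phi0.
have -> : (\sum_(m <= n < M) ((phi n%:R)%:E * mu [set x | w x = n]) =
   \int[mu]_x (\sum_(m <= n < M) ((phi n%:R)%:E * (\1_[set x | w x = n] x)%:E))%E)%E.
  rewrite big_nat ge0_integral_sum //= -big_nat.
  apply: eq_bigr => n _; rewrite ge0_integralZl //; last by rewrite lee_fin phi0.
  all: first [by rewrite integral_indic // setIT | by apply/measurable_EFinP; exact: measurable_indic | by move=> x _; rewrite lee_fin | idtac].
apply: ge0_le_integral => //.
- by move=> x _; apply: sume_ge0 => n _; exact: ind0.
- exact: emeasurable_sum mind.
- move=> x _.
  case: (boolP (m <= w x < M)%N) => hw.
    rewrite (bigD1_seq (w x)) /= ?mem_index_iota ?iota_uniq //.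
    rewrite big1 ?adde0.
      by rewrite indicE mem_set // mule1.
    move=> n /eqP nw; rewrite indicE memNset ?mule0 //.
    by move=> /= wn; apply: nw.
  rewrite big1_seq ?lee_fin ?phi0 // => n /andP[_].
  rewrite mem_index_iota => hn.
  rewrite indicE memNset ?mule0 // => /= wn.
  by move: hw; rewrite wn hn.
Qed.

Lemma series_le_integral d (T : measurableType d) (R : realType)
  (mu : {measure set T -> \bar R}) (w : T -> nat) (phi : R -> R) :
  (forall t, 0 <= t -> 0 <= phi t) ->
  (forall n, measurable [set x | w x = n]) ->
  (\sum_(0 <= n <oo) ((phi n%:R)%:E * mu [set x | w x = n])
     <= \int[mu]_x (phi (w x)%:R)%:E)%E.
Proof.
move=> phi0 mE.
apply: lime_le.
  apply: is_cvg_nneseries => n _ _; apply: mule_ge0 => //; by rewrite lee_fin phi0.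
by apply: nearW => M; apply: partial_le_integral.
Qed.
Lemma ev_lt (R : realType) (u : nat -> \bar R) (c : R) :
  (forall n m, (n <= m)%N -> (u m <= u n)%E) -> u n @[n --> \oo] --> 0%E -> 0 < c ->
  \forall n \near \oo, (u n < c%:E)%E.
Proof.
move=> uh uc c0.
have [N uN] : exists N, (u N < c%:E)%E.
  apply/not_existsP => H.
  have : (c%:E <= lim (u n @[n --> \oo]))%E.
    apply: lime_ge; first by apply/cvg_ex; exists 0%E.
    by apply: nearW => n; rewrite leNgt; apply/negP => /(H n).
  by rewrite (cvg_lim _ uc) // lee_fin leNgt c0.
exists N => // n /= Nn; exact: le_lt_trans (uh _ _ Nn) uN.
Qed.

Lemma geom_le2 (R : realType) M : \sum_(0 <= j < M) ((2:R)^-1) ^+ j <= 2.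
Proof.
have -> : \sum_(0 <= j < M) ((2:R)^-1) ^+ j = 2 - 2 * ((2:R)^-1) ^+ M.
  elim: M => [|M IH]; first by rewrite big_geq // expr0 mulr1 subrr.
  by rewrite big_nat_recr //= IH exprS; field.
have h2 : (0:R) <= 2^-1 by rewrite invr_ge0.
have := exprn_ge0 M h2. lra.
Qed.

Lemma mul_count (R : realType) (x : \bar R) (b : nat -> nat) n :
  (0 <= x)%E ->
  (((\sum_(0 <= j < n) b j)%N)%:R%:E * x = \sum_(0 <= j < n) ((b j)%:R%:E * x))%E.
Proof.
move=> x0; elim: n => [|n IH]; first by rewrite !big_geq // mul0e.
by rewrite !big_nat_recr //= natrD EFinD ge0_muleDl ?lee_fin // IH.
Qed.

Section Core.
Local Open Scope ereal_scope.

Lemma core d (Gm : measurableType d) (R : realType) (lam : {measure set Gm -> \bar R})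
  (a : nat -> Gm -> \bar R) (K0 : set Gm) (dd : nat -> Gm) :
  (forall n g, 0 <= a n g) -> (forall n, measurable_fun setT (a n)) ->
  (forall g, \sum_(0 <= n <oo) a n g < +oo) ->
  measurable K0 -> 0 < lam K0 -> lam K0 < +oo ->
  exists (B : set Gm) (Kq : nat -> nat), [/\ measurable B, 0 < lam B,
    (forall n, (0 < Kq n)%N), (fun n => (Kq n)%:R : R) @ \oo --> +oo%R &
    forall g, (B g \/ exists k, g = dd k) ->
      \sum_(0 <= n <oo) ((Kq n)%:R%:E * a n g) < +oo].
Proof.
move=> a0 ma afin mK0 K0pos K0fin.
pose T N g := \sum_(0 <= n <oo) (if (N <= n)%N then a n g else 0).
have Tif0 N g n : 0 <= (if (N <= n)%N then a n g else 0) by case: ifP.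
have T0 N g : 0 <= T N g by apply: nneseries_ge0 => n _ _.
have TE N g : T N g = \sum_(N <= n <oo) a n g.
  by rewrite /T [in RHS]eseries_cond /= [in RHS]eseries_mkcond.
have Tanti N N' g : (N <= N')%N -> T N' g <= T N g.
  move=> NN'; apply: lee_nneseries => // n _.
  case: ifPn => hN'; first by rewrite (leq_trans NN' hN').
  by case: ifP.
have Tcvg g : T N g @[N --> \oo] --> 0.
  rewrite (_ : (fun N => T N g) = (fun N => \sum_(N <= n <oo) a n g)); last first.
    by apply/funext => N; rewrite TE.
  by apply: (@nneseries_tail_cvg _ _ xpredT) => //; exact: afin.
have Tm N : measurable_fun setT (T N).
  have := ge0_emeasurable_sum (D:=setT) (h:=fun n g => if (N <= n)%N then a n g else 0) (P:=xpredT).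
  move=> H.
  apply: H.
  - by move=> k x _ _.
  - move=> k _; case: (N <= k)%N; [exact: ma | exact: measurable_cst].
have Tle N M g : \sum_(0 <= n < M) (if (N <= n)%N then a n g else 0) <= T N g.
  exact: nneseries_lim_ge.
have K0fn : lam K0 \is a fin_num by rewrite ge0_fin_numE // ltW.
set r := fine (lam K0).
have K0E : lam K0 = r%:E by rewrite fineK.
have r0 : (0 < r)%R by rewrite -lte_fin -K0E.
pose e (j : nat) : R := ((2:R)^-1 ^+ j)%R.
have e0 j : (0 < e j)%R by rewrite exprn_gt0 // invr_gt0.
pose U j N := K0 `&` [set g | (e j)%:E < T N g].
have mU j N : measurable (U j N).
  by apply: emeasurable_fun_o_infty => //; apply: measurable_funS (Tm N).
have Uanti j N N' : (N <= N')%N -> U j N' `<=` U j N.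
  by move=> NN' g [Kg /= Hg]; split => //=; apply: lt_le_trans Hg (Tanti _ _ _ NN').
have step j M : exists N, [/\ (M < N)%N, lam (U j N) < (r * e j.+2)%:E &
    forall k, (k <= j)%N -> T N (dd k) <= (e j)%:E].
  have h1 : \forall N \near \oo, (M < N)%N by exists M.+1.
  have h2 : \forall N \near \oo, lam (U j N) < (r * e j.+2)%:E.
    apply: ev_lt; last by rewrite mulr_gt0.
      by move=> n m nm; apply: le_measure; rewrite ?inE //; exact: Uanti.
    have -> : 0 = lam (\bigcap_N U j N).
      suff -> : \bigcap_N U j N = set0 by rewrite measure0.
      apply/seteqP; split => // g /= Hg.
      have [N0 _ HN0] := ev_lt (fun n m nm => Tanti n m g nm) (Tcvg g) (e0 j).
      have := HN0 N0 (leqnn N0); rewrite /= ltNge => /negP; apply.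
      by have [_ /ltW] := Hg N0 I.
    apply: nonincreasing_cvg_mu => //.
    - by apply: le_lt_trans K0fin; apply: le_measure; rewrite ?inE //; apply: subIsetl.
    - by apply: bigcapT_measurable.
    - by move=> n m nm; apply/subsetPset; exact: Uanti.
  have h3 : \forall N \near \oo, forall k : 'I_j.+1, T N (dd k) <= (e j)%:E.
    apply: filter_forall => k.
    have [N0 _ HN0] := ev_lt (fun n m nm => Tanti n m (dd k) nm) (Tcvg (dd k)) (e0 j).
    by exists N0 => // n /HN0 /ltW.
  have [N0 _ HN0] := filterI h1 (filterI h2 h3).
  have [hA [hB hC]] := HN0 N0 (leqnn N0).
  exists N0; split => // k kj.
  exact: (hC (Ordinal (kj : (k < j.+1)%N))).
have [stepf Hstep] := choice (fun jM : nat * nat => step jM.1 jM.2).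
pose Nseq := fix Ns (j : nat) : nat :=
  stepf (j, match j with 0%N => 0%N | j'.+1 => Ns j' end).
have HN j : [/\ (match j with 0%N => 0%N | j'.+1 => Nseq j' end < Nseq j)%N,
    lam (U j (Nseq j)) < (r * e j.+2)%:E &
    forall k, (k <= j)%N -> T (Nseq j) (dd k) <= (e j)%:E].
  by case: j => [|j]; exact: (Hstep (_, _)).
have Nincr j : (Nseq j < Nseq j.+1)%N by have [] := HN j.+1.
have Nge j : (j < Nseq j)%N.
  elim: j => [|j IH]; first by have [] := HN 0%N.
  exact: leq_ltn_trans IH (Nincr j).
have Nmono j j' : (j <= j')%N -> (Nseq j <= Nseq j')%N.
  move=> /subnK <-; elim: (j' - j)%N => [|k IH] //.
  by rewrite addSn; apply: leq_trans IH (ltnW (Nincr _)).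
pose B := K0 `\` \bigcup_j U j (Nseq j).
have mB : measurable B by apply: measurableD => //; apply: bigcupT_measurable.
have Bpos : 0 < lam B.
  rewrite lt_neqAle measure_ge0 andbT eq_sym; apply/negP => /eqP B0.
  have mbig : measurable (\bigcup_j U j (Nseq j)) by apply: bigcupT_measurable => j.
  have h1 : lam K0 <= lam B + lam (\bigcup_j U j (Nseq j)).
    have hU := measureU2 lam mB mbig.
    apply: le_trans hU.
    apply: le_measure; rewrite ?inE.
    - exact: mK0.
    - by apply: measurableU => //; apply: bigcupT_measurable.
    move=> g Kg; case: (pselect ((\bigcup_j U j (Nseq j)) g)) => h; [by right|by left].
  have h2 : lam (\bigcup_j U j (Nseq j)) <= (r / 2)%:E.
    have hs := measure_sigma_subadditive lam (fun j => mU j (Nseq j)) mbig (@subset_refl _ _).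
    apply: le_trans hs _.
    apply: le_trans (lee_nneseries (v := fun j => (r * e j.+2)%:E) _ _) _.
    - by move=> i _ _; apply: measure_ge0.
    - by move=> i _; apply: ltW; have [] := HN i.
    apply: lime_le; first by apply: is_cvg_nneseries => i _ _; rewrite lee_fin mulr_ge0 // ltW.
    apply: nearW => M; rewrite sumEFin lee_fin.
    have -> : (\sum_(0 <= i < M) (r * e i.+2) = r / 4 * \sum_(0 <= i < M) e i)%R.
      by rewrite mulr_sumr; apply: eq_bigr => i _; rewrite /e !exprS; field.
    have := geom_le2 R M; have := ltW r0; rewrite -/(e _). nra.
  move: h1; rewrite B0 add0e K0E => /le_trans /(_ h2); rewrite lee_fin.
  by apply/negP; rewrite -ltNge; lra.
pose cnt n := (\sum_(0 <= j < n) (if (Nseq j <= n)%N then 1 else 0))%N.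
exists B, (fun n => (cnt n).+1); split => //.
- apply/cvgrnyP/cvgnyPge => A; exists (Nseq A) => // n /= An.
  apply: leqW; apply: (@leq_trans (\sum_(0 <= j < A.+1) (if (Nseq j <= n)%N then 1 else 0))%N).
    rewrite (eq_big_nat _ _ (F2 := fun _ => 1%N)); last first.
      by move=> j /andP[_ jA]; rewrite (leq_trans (Nmono _ _ _) An).
    by rewrite sum_nat_const_nat muln1 subn0 leqnSn.
  have An' : (A.+1 <= n)%N by apply: leq_trans (Nge A) An.
  by rewrite /cnt (@big_cat_nat _ _ _ A.+1 0 n _ _ (leq0n _) An') /= leq_addr.
move=> g Hg.
have [j0 Hj0] : exists j0, forall j, (j0 <= j)%N -> T (Nseq j) g <= (e j)%:E.
  case: Hg => [[Kg nU]|[k ->]].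
  - exists 0%N => j _; rewrite leNgt; apply/negP => H; apply: nU; exists j => //.
  - by exists k => j kj; have [_ _] := HN j; apply.
have Sfin : T 0%N g \is a fin_num.
  by rewrite ge0_fin_numE // TE; exact: afin.
set S := fine (T 0%N g).
have S0 : (0 <= S)%R by rewrite fine_ge0.
pose C := (S / e j0 + 1)%R.
have C0 : (0 <= C)%R by rewrite addr_ge0 // divr_ge0 // ltW.
have HC j : T (Nseq j) g <= (C * e j)%:E.
  case: (leqP j0 j) => hj.
  - apply: le_trans (Hj0 j hj) _; rewrite lee_fin /C mulrDl mul1r lerDr.
    by apply: mulr_ge0; [apply: divr_ge0 => //; apply: ltW | apply: ltW].
  - apply: le_trans (Tanti 0%N _ g (leq0n _)) _; rewrite -(fineK Sfin) lee_fin -/S.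
    have eje : (e j0 <= e j)%R.
      apply: ler_wiXn2l; [by rewrite invr_ge0 | by rewrite invf_le1 // ler1n | exact: ltnW].
    have ej0 := e0 j0.
    have tE : S = (S / e j0 * e j0)%R by rewrite divfK // gt_eqF.
    have t0 : (0 <= S / e j0)%R by apply: divr_ge0 => //; apply: ltW.
    have ej := e0 j.
    rewrite /C {1}tE; move: tE t0 ej eje; set t := (S / e j0)%R => tE t0 ej eje.
    nra.
have part M : \sum_(0 <= n < M) (((cnt n).+1)%:R%:E * a n g) <= T 0%N g + (C * 2)%:E.
  rewrite (eq_bigr (fun n => a n g + (cnt n)%:R%:E * a n g)); last first.
    by move=> n _; rewrite -addn1 natrD EFinD ge0_muleDl // mul1e addeC.
  rewrite big_split /=; apply: leeD.
    by rewrite TE; exact: nneseries_lim_ge.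
  apply: (@le_trans _ _ (\sum_(0 <= n < M) \sum_(0 <= j < M)
     (((if (Nseq j <= n)%N then 1 else 0)%N)%:R%:E * a n g))).
    rewrite big_nat [X in _ <= X]big_nat; apply: lee_sum => n /andP[_ nM].
    rewrite /cnt mul_count //; apply: lee_sum_nneg_natr; last exact: ltnW.
    by move=> m _ _; apply: mule_ge0 => //; rewrite lee_fin.
  rewrite exchange_big_nat /=.
  apply: (@le_trans _ _ (\sum_(0 <= j < M) (C * e j)%:E)).
    apply: lee_sum => j _; apply: le_trans (HC j).
    apply: le_trans (Tle (Nseq j) M g); apply: lee_sum => n _.
    by case: ifP => _; rewrite ?mul1e ?mul0e.
  rewrite sumEFin lee_fin -mulr_sumr; apply: ler_wpM2l => //; exact: geom_le2.
apply: (@le_lt_trans _ _ (T 0%N g + (C * 2)%:E)).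
  apply: lime_le; last exact: nearW part.
  by apply: is_cvg_nneseries => n _ _; apply: mule_ge0 => //; rewrite lee_fin.
by rewrite -(fineK Sfin) -EFinD ltry.
Qed.
End Core.

Unset Implicit Arguments.

Theorem mainTheorem15 (R : realType)
  (G : ptopologicalType) (mulG : G -> G -> G) (invG : G -> G) (eG : G)
  (hG : lcsc_cg_group mulG invG eG)
  (lam : {measure set (borelT G) -> \bar R}) (hlam : left_Haar mulG lam)
  (H : ptopologicalType) (mulH : H -> H -> H) (invH : H -> H) (eH : H)
  (hH : lcsc_cg_group mulH invH eH)
  (SH : set H) (hSH : compact SH /\ generates mulH invH eH SH)
  (phi : R -> R) (hphi : forall t, 0 <= t -> 0 <= phi t)
  (X : completePseudoMetricType R) (hX : polish_space X)
  (nu : probability (borelT X) R) (act : G -> X -> X)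
  (hact : free_pmp_action mulG eG nu act)
  (c : G -> X -> H) (hc : cocycle mulG act mulH c)
  (hint : phi_integrable mulG invG eG nu mulH invH eH SH phi c) :
  exists (A : set (borelT G)) (K : nat -> nat),
    [/\ measurable A /\ (0 < lam A)%E,
        exists D : set G, countable D /\ dense D /\ D `<=` A,
        (forall n, (0 < n)%N -> (0 < K n)%N),
        (fun n => (K n)%:R : R) @ \oo --> +oo &
        forall g : G, A g ->
          (\sum_(1 <= n <oo)
             (((K n)%:R * phi n%:R)%:E *
              nu [set x | word_length mulH invH eH SH (c g x) = n]) < +oo)%E].
Proof.
pose wl := word_length mulH invH eH SH.
have mL n : measurable ([set h | wl h = n] : set (borelT H)).
  exact: wl_level_measurable hH hSH.1 hSH.2 n.
pose E n : set (borelT G * borelT X) := (fun p => c p.1 p.2) @^-1` [set h | wl h = n].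
have mE n : measurable (E n).
  have := hc.1 measurableT _ (mL n); by rewrite setTI.
have xsE n g : xsection (E n) g = [set x | wl (c g x) = n].
  by apply/seteqP; split => x; rewrite /xsection /= inE.
pose a n (g : borelT G) := ((phi n%:R)%:E * nu (xsection (E n) g))%E.
have a0 n g : (0 <= a n g)%E.
  by apply: mule_ge0 => //; rewrite lee_fin hphi.
have ma n : measurable_fun setT (a n).
  apply: measurable_funeM.
  exact: (measurable_fun_xsection nu (mE n)).
have afin g : (\sum_(0 <= n <oo) a n g < +oo)%E.
  apply: le_lt_trans (hint.2 g).
  rewrite /a; under eq_eseriesr do rewrite xsE.
  apply: series_le_integral => // n.
  by rewrite -xsE; exact: measurable_xsection.
have [hgrp [_ [_ [hausG [lcG [scG _]]]]]] := hG.
have [K0 nK0 [cK0 clK0]] := lcG eG I.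
rewrite withinET in nK0.
have mK0 : measurable (K0 : set (borelT G)) by apply: closed_borel.
have K0fin : (lam K0 < +oo)%E by case: hlam => _ + _; apply.
have K0pos : (0 < lam K0)%E.
  move: nK0; rewrite nbhsE => -[V [oV Ve] VK].
  have mV : measurable (V : set (borelT G)) by exact: open_borel.
  apply: lt_le_trans (le_measure _ (mem_set mV) (mem_set mK0) VK).
  by case: hlam => _ _; apply => //; exists eG.
have [bb cbb [bbo bbx]] := scG.
have [bs bsurj] : exists bs : nat -> set G, set_surj setT bb bs by apply/pcard_surjP.
pose dd k := xget eG (bs k).
have ddense : dense (range dd).
  move=> O [x Ox] oO.
  have : nbhs x O by apply: open_nbhs_nbhs.
  move=> /(bbx x) [U [bbU Ux] UO].
  have [k _ bkU] := bsurj U bbU.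
  exists (dd k); split; last by exists k.
  apply: UO; rewrite -bkU /dd; apply: xgetPex; exists x; by rewrite bkU.
have [B [Kq [mB Bpos Kpos Kinf Bser]]] := core (Gm := borelT G) (lam := lam) dd a0 ma afin mK0 K0pos K0fin.
have mD : measurable (range dd : set (borelT G)).
  have -> : range dd = \bigcup_k [set dd k].
    by apply/seteqP; split => x; [case=> k _ <-; exists k | case=> k _ ->; exists k].
  apply: bigcupT_measurable => k; apply: closed_borel; apply: compact_closed => //.
  exact: compact_set1.
have mA : measurable (B `|` range dd : set (borelT G)) by exact: measurableU.
exists (B `|` range dd), Kq; split => //.
- split => //.
  apply: lt_le_trans Bpos _; apply: le_measure (mem_set mB) (mem_set mA) _.
  by move=> g Bg; left.
- exists (range dd); split; first exact: card_image_le.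
  by split => // g Dg; right.
- move=> g Ag.
  apply: le_lt_trans (Bser g _); last by case: Ag => [Bg|[k _ <-]]; [left|right; exists k].
  have f0 n : (0 <= (Kq n)%:R%:E * a n g)%E by apply: mule_ge0 => //; rewrite lee_fin.
  rewrite (nneseries_recl (P := xpredT)) //.
  apply: le_trans (leeDr _ (f0 0%N)).
  rewrite le_eqVlt; apply/orP; left; apply/eqP.
  apply: eq_eseriesr => n _.
  by rewrite /a xsE EFinM muleA.
Qed.
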